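(* Let $\phi=\sum_{n=-\infty}^{\infty}a_ne_n\in L^\infty$ and suppose $V_\phi^*$ is an isometry on $H^2$. Then $\sum_{n=-\infty}^{\infty}|a_n|^2=1$.
   Context: $L^2=L^2(\mathbb{T})$ with orthonormal basis $e_n(z)=z^n$, $n\in\mathbb{Z}$; $H^2$ is the closed span of $\{e_n\}_{n\ge0}$, $P:L^2\to H^2$ the orthogonal projection, $M_\phi$ multiplication by $\phi$. $W:L^2\to L^2$: $We_n=e_{n/2}$ for $n$ even, $0$ for $n$ odd. $K:H^2\to L^2$: $Ke_{2n}=e_n$, $Ke_{2n+1}=e_{-n-1}$ ($n\ge0$). The slant H-Toeplitz operator is $V_\phi=WPM_\phi K:H^2\to H^2$. *)

(* Defs.v *)
From HB Require Import structures.
From mathcomp Require Import all_boot all_order all_algebra.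
From mathcomp Require Import complex.
From mathcomp Require Import all_classical all_reals all_analysis.
Set Implicit Arguments. Unset Strict Implicit. Unset Printing Implicit Defensive.
Import Order.TTheory GRing.Theory Num.Theory.
Import numFieldNormedType.Exports.
Local Open Scope classical_set_scope.
Local Open Scope ring_scope.
Local Open Scope complex_scope.

Section Defs.
Variable R : realType.
Local Notation C := R[i].

Definition cconj (z : C) : C := complex.Re z -i* complex.Im z.
Definition cnorm2 (z : C) : R := complex.Re z ^+ 2 + complex.Im z ^+ 2.

(** value of a complex series over nat (defined componentwise via [lim];
    meaningful when the series converges) *)
Definition csum (u : nat -> C) : C :=
  (lim (series (fun n => complex.Re (u n)) @ \oo)) +i* (lim (series (fun n => complex.Im (u n)) @ \oo)).

(** value of a complex series indexed by int: terms n and -n-1 grouped *)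
Definition zsum (f : int -> C) : C := csum (fun n => f (Posz n) + f (Negz n)).

Definition zsum_to (f : int -> R) (l : R) : Prop :=
  series (fun n => f (Posz n) + f (Negz n)) @ \oo --> l.

(** L^2 = L^2(T) is modelled, via the orthonormal basis (e_n)_{n in Z},
    by sequences int -> C (coefficient of e_n); H^2 by sequences nat -> C
    (coefficient of e_n, n >= 0). *)
Definition inH2 (x : nat -> C) : Prop :=
  cvg (series (fun n => cnorm2 (x n)) @ \oo).

Definition H2norm2 (x : nat -> C) : R := lim (series (fun n => cnorm2 (x n)) @ \oo).

Definition H2inner (x y : nat -> C) : C := csum (fun n => x n * cconj (y n)).

(** Fourier coefficients of phi : T -> C, where T is parametrized by
    t in [0, 2pi] (phi t stands for phi(e^{it})), w.r.t. normalized Lebesgue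
    measure:  a_n = (1/2pi) int_0^{2pi} phi(t) e^{-int} dt. *)
Definition fourier (phi : R -> C) (n : int) : C :=
  let mu := @lebesgue_measure R in
  let D := `[0, pi *+ 2]%classic in
  ((pi *+ 2)^-1 * Rintegral mu D
      (fun t => complex.Re (phi t) * cos (n%:~R * t) + complex.Im (phi t) * sin (n%:~R * t)))
  +i*
  ((pi *+ 2)^-1 * Rintegral mu D
      (fun t => complex.Im (phi t) * cos (n%:~R * t) - complex.Re (phi t) * sin (n%:~R * t))).

Definition Linfty (phi : R -> C) : Prop :=
  measurable_fun `[0, pi *+ 2]%classic (fun t => complex.Re (phi t)) /\
  measurable_fun `[0, pi *+ 2]%classic (fun t => complex.Im (phi t)) /\
  exists M : R, {ae @lebesgue_measure R, forall t,
     `[0, pi *+ 2]%classic t -> cnorm2 (phi t) <= M}.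

(* K : H^2 -> L^2,  K e_{2n} = e_n,  K e_{2n+1} = e_{-n-1} *)
Definition Kop (x : nat -> C) : int -> C :=
  fun k => match k with Posz n => x (n.*2) | Negz n => x (n.*2).+1 end.
(* M_phi : multiplication by phi = sum_n a_n e_n; since e_n e_m = e_{n+m},
   the coefficient of e_k in phi*y is sum_m a_{k-m} y_m *)
Definition Mop (a : int -> C) (y : int -> C) : int -> C :=
  fun k => zsum (fun m => a (k - m) * y m).
(* P : L^2 -> H^2, orthogonal projection (kept inside L^2 coordinates) *)
Definition Pop (y : int -> C) : int -> C :=
  fun k => if (0 <= k)%R then y k else 0.
(* W : W e_n = e_{n/2} (n even), 0 (n odd); coefficient of e_k in Wy is y_{2k} *)
Definition Wop (y : int -> C) : int -> C := fun k => y (k *+ 2).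
Definition toH2 (y : int -> C) : nat -> C := fun n => y (Posz n).

Definition Vop (phi : R -> C) (x : nat -> C) : nat -> C :=
  toH2 (Wop (Pop (Mop (fourier phi) (Kop x)))).

End Defs.

(* Main.v *)
Require Import Defs.
From HB Require Import structures.
From mathcomp Require Import all_boot all_order all_algebra.
From mathcomp Require Import complex.
From mathcomp Require Import all_classical all_reals all_analysis.
From mathcomp Require Import lra.
Import Order.TTheory GRing.Theory Num.Theory.
Import numFieldNormedType.Exports.
Local Open Scope classical_set_scope.
Local Open Scope ring_scope.

Section H.
Variable R : realType.

Lemma series_single (f : nat -> R) j : (forall n, n != j -> f n = 0) ->
  series f @ \oo --> f j.
Proof.
move=> Hf; apply: cvg_near_cst; exists j.+1 => // N /= HN.
rewrite /series /= big_mkord (bigD1 (Ordinal HN)) //= big1 ?addr0 // => i ne.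
apply: Hf; apply/eqP => E; move/eqP: ne; apply; exact: val_inj.
Qed.

Lemma csum_single (u : nat -> R[i]) j : (forall n, n != j -> u n = 0) ->
  csum u = u j.
Proof.
move=> Hu; rewrite /csum.
rewrite (cvg_lim (@Rhausdorff R) (@series_single (fun n => complex.Re (u n)) j _)); last first.
  by move=> n /Hu ->.
rewrite (cvg_lim (@Rhausdorff R) (@series_single (fun n => complex.Im (u n)) j _)); last first.
  by move=> n /Hu ->.
by case: (u j).
Qed.

Definition ej (j : nat) : nat -> R[i] := fun n => if n == j then 1 else 0.

Lemma cnorm2_ej_ne j n : n != j -> cnorm2 (ej j n) = 0.
Proof. by move=> ne; rewrite /ej (negbTE ne) /cnorm2 /= expr0n addr0. Qed.

Lemma inH2_ej j : inH2 (ej j).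
Proof.
apply/cvg_ex; exists (cnorm2 (ej j j)); apply: series_single => n ne.
exact: cnorm2_ej_ne.
Qed.

Lemma H2norm2_e0 : H2norm2 (ej 0) = 1.
Proof.
rewrite /H2norm2 (cvg_lim (@Rhausdorff R) (@series_single (fun n => cnorm2 (ej 0 n)) 0 _)).
  by rewrite /ej eqxx /cnorm2 /= expr0n expr1n addr0.
by move=> n ne; exact: cnorm2_ej_ne.
Qed.

Lemma inner_ej_left j y : H2inner (ej j) y = cconj (y j).
Proof.
rewrite /H2inner (@csum_single _ j); first by rewrite /ej eqxx mul1r.
by move=> n ne; rewrite /ej (negbTE ne) mul0r.
Qed.

Lemma inner_e0_right x : H2inner x (ej 0) = x 0%N.
Proof.
rewrite /H2inner (@csum_single _ 0).
  rewrite /ej eqxx /cconj /=.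
  have -> : (1 -i* 0)%C = 1 :> R[i] by apply/eqP; rewrite eq_complex /= oppr0 !eqxx.
  by rewrite mulr1.
move=> n ne; rewrite /ej (negbTE ne) /cconj /=.
have -> : ((- 0)*i)%C = 0 :> R[i] by apply/eqP; rewrite eq_complex /= oppr0 !eqxx.
by rewrite mulr0.
Qed.

Lemma cc (z : R[i]) : cnorm2 (cconj z) = cnorm2 z.
Proof. by rewrite /cnorm2 /cconj /= sqrrN. Qed.


Lemma V_even (phi : R -> R[i]) p :
  Vop phi (ej p.*2) 0%N = fourier phi (0 - Posz p).
Proof.
rewrite /Vop /toH2 /Wop /Pop mul0rn lexx /Mop /zsum (@csum_single _ p).
  by rewrite /Kop /ej eqxx mulr1 ifF ?mulr0 ?addr0 //; apply/eqP => /(congr1 odd); rewrite /= odd_double.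
move=> n ne; rewrite /Kop /ej ifF; last by apply/eqP => /(can_inj doubleK) E; rewrite E eqxx in ne.
by rewrite ifF ?mulr0 ?addr0 //; apply/eqP => /(congr1 odd); rewrite /= !odd_double.
Qed.

Lemma V_odd (phi : R -> R[i]) p :
  Vop phi (ej p.*2.+1) 0%N = fourier phi (0 - Negz p).
Proof.
rewrite /Vop /toH2 /Wop /Pop mul0rn lexx /Mop /zsum (@csum_single _ p).
  by rewrite /Kop /ej eqxx mulr1 ifF ?mulr0 ?add0r //; apply/eqP => /(congr1 odd); rewrite /= odd_double.
move=> n ne; rewrite /Kop /ej ifF; last by apply/eqP => /(congr1 odd); rewrite /= !odd_double.
by rewrite ifF ?mulr0 ?addr0 //; apply/eqP => -[] /(can_inj doubleK) E; rewrite E eqxx in ne.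
Qed.

End H.

Lemma cvg_idx (g : nat -> nat) : (forall N, (N <= g N)%N) -> g @ \oo --> \oo.
Proof.
move=> hg P [M _ HM]; exists M => // n /= Hn; apply: HM => /=.
exact: leq_trans Hn (hg n).
Qed.

Theorem mainTheorem4 (R : realType) (phi : R -> R[i]) (Vstar : (nat -> R[i]) -> (nat -> R[i])) :
  Linfty phi ->
  (* Vstar is the Hilbert-space adjoint of V_phi on H^2 *)
  (forall x, inH2 x -> inH2 (Vstar x)) ->
  (forall x y, inH2 x -> inH2 y -> H2inner (Vop phi x) y = H2inner x (Vstar y)) ->
  (* Vstar is an isometry on H^2 *)
  (forall x, inH2 x -> H2norm2 (Vstar x) = H2norm2 x) ->
  zsum_to (fun n => cnorm2 (fourier phi n)) 1.
Proof.
move=> _ inV adj iso.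
set y := Vstar (ej R 0).
have hy j : cconj (y j) = Vop phi (ej R j) 0%N.
  have := adj (ej R j) (ej R 0) (inH2_ej _ _) (inH2_ej _ _).
  by rewrite inner_ej_left inner_e0_right => ->.
set b := fun n => cnorm2 (y n).
have n1 n : 0 - Posz n.+1 = Negz n by rewrite sub0r NegzE.
have n2 n : 0 - Negz n = Posz n.+1 by rewrite sub0r NegzE opprK.
have hb0 p : b p.*2 = cnorm2 (fourier phi (0 - Posz p)) by rewrite /b -cc hy V_even.
have hb1 p : b p.*2.+1 = cnorm2 (fourier phi (Posz p.+1)) by rewrite /b -cc hy V_odd n2.
have Tb : series b @ \oo --> (1:R).
  have h := inV _ (inH2_ej R 0).
  have e := iso _ (inH2_ej R 0).
  rewrite /H2norm2 in e; rewrite /inH2 -/y e in h.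
  have := H2norm2_e0 R; rewrite /H2norm2 => <-; exact: h.
rewrite /zsum_to.
set S := series _.
have key N : S N.+1 = series b (N.*2.+1) + b (N.*2.+2).
  elim: N => [|N IH].
    rewrite /S !seriesSr /series /= big_geq // (hb0 0) (hb0 1) -n1 sub0r oppr0.
    by rewrite big_geq // !add0r ?addr0.
  rewrite /S seriesSr -/S IH doubleS !seriesSr -n1 -hb1 -(hb0 N.+2) !doubleS.
  lra.
rewrite -cvg_shiftS.
have -> : [sequence S n.+1]_n = (fun N => series b (N.*2.+1) + b (N.*2.+2)).
  by apply/funext => N; rewrite /= key.
rewrite -[1 : R]addr0; apply: cvgD.
  apply: (cvg_comp (fun N => N.*2.+1) (series b) _ Tb).
  by apply: cvg_idx => N; rewrite -addnn; exact: leqW (leq_addr _ _).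
have b0 : b @ \oo --> (0:R) by apply: cvg_series_cvg_0; exact: cvgP Tb.
apply: (cvg_comp (fun N => N.*2.+2) b _ b0).
by apply: cvg_idx => N; rewrite -addnn; exact: leqW (leqW (leq_addr _ _)).
Qed.
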